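(* In $2\times2\times3$ Abalone, let $C0$ be the constellation with Black marbles on $c,g,j$ and Gray marbles on $a,d,h$, and let $C1$ be the constellation with Black marbles on $c,f,g$ and Gray marbles on $a,d,h$. If $C$ is any constellation obtained from $C0$ by a single legal Black move and $C$ is not isomorphic to $C1$, then Gray, moving next from $C$, can force a win.
   Context: The $2\times2\times3$ board has 10 hexagonal cells in three vertical columns of sizes 3, 4, 3. In axial coordinates (cells adjacent when differing by $\pm(0,1),\pm(1,0),\pm(1,-1)$) the cells are $a=(0,0)$, $b=(0,1)$, $c=(0,2)$ (left column, bottom to top), $d=(1,-1)$, $e=(1,0)$, $f=(1,1)$, $g=(1,2)$ (middle column, bottom to top), $h=(2,-1)$, $i=(2,0)$, $j=(2,1)$ (right column, bottom to top). Its maximal lines are $a$-$b$-$c$, $d$-$e$-$f$-$g$, $h$-$i$-$j$, $a$-$e$-$i$, $b$-$f$-$j$, $c$-$g$, $d$-$h$, $a$-$d$, $b$-$e$-$h$, $c$-$f$-$i$, $g$-$j$; adjacent cells are consecutive cells of these lines. A constellation assigns each cell black, gray or empty; each player has 3 marbles. Black (Left) and Gray (Right) alternate turns. On a turn a player moves 1, 2 or 3 of their own marbles occupying consecutive cells of a line, one step in one of the six lattice directions. Broadside move (direction not parallel to the group's line, or a single marble): each moved marble must land on an empty board cell. In-line move (direction parallel to the line, group of $k$ marbles): if the cell $X$ beyond the front marble is an empty board cell the group advances; if $X$ holds opponent marbles, forming $m$ consecutive opponent marbles in that direction, the push is legal only if $m<k$ and the cell after them is empty or off the board, and then all shift one step,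 an opponent marble leaving the board being removed; moves with $X$ off the board or holding an own marble are illegal, and one may never move one's own marble off the board. The game ends as soon as one marble is pushed off, the pusher winning; never-ending play is a draw. A player can force a win from a constellation with a given player to move if they have a strategy guaranteeing a push-off in finitely many moves against all opponent play. The symmetries of this board are the identity, the left-right reflection ($a\leftrightarrow h$, $b\leftrightarrow i$, $c\leftrightarrow j$, middle column fixed), the top-bottom reflection ($a\leftrightarrow c$, $d\leftrightarrow g$, $e\leftrightarrow f$, $h\leftrightarrow j$, $b,i$ fixed), and their composition; two constellations are isomorphic if a symmetry maps one onto the other. $C0$ is the official starting constellation of $2\times2\times3$ Abalone. *)

(* Defs.v *)
From Stdlib Require Import ZArith List Bool.
Import ListNotations.
Open Scope Z_scope.

(* The ten cells: a b c (left column), d e f g (middle), h i j (right). *)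
Inductive cell := ca | cb | cc | cd | ce | cf | cg | ch | ci | cj.

Definition all_cells : list cell := [ca; cb; cc; cd; ce; cf; cg; ch; ci; cj].

(* Axial coordinates. *)
Definition coord (x : cell) : Z * Z :=
  match x with
  | ca => (0, 0) | cb => (0, 1) | cc => (0, 2)
  | cd => (1, -1) | ce => (1, 0) | cf => (1, 1) | cg => (1, 2)
  | ch => (2, -1) | ci => (2, 0) | cj => (2, 1)
  end.

Definition cell_at (p : Z * Z) : option cell :=
  find (fun x => (fst (coord x) =? fst p) && (snd (coord x) =? snd p)) all_cells.

Inductive dir := dN | dS | dE | dW | dSE | dNW.

Definition vec (u : dir) : Z * Z :=
  match u with
  | dN => (0, 1) | dS => (0, -1) | dE => (1, 0) | dW => (-1, 0)
  | dSE => (1, -1) | dNW => (-1, 1)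
  end.

Definition neg (u : dir) : dir :=
  match u with
  | dN => dS | dS => dN | dE => dW | dW => dE | dSE => dNW | dNW => dSE
  end.

Definition go (x : cell) (u : dir) (n : nat) : option cell :=
  cell_at (fst (coord x) + Z.of_nat n * fst (vec u),
           snd (coord x) + Z.of_nat n * snd (vec u)).

Inductive content := Blk | Gry | Emp.
Inductive player := Black | Gray.

Definition own (p : player) : content := match p with Black => Blk | Gray => Gry end.
Definition other (p : player) : player := match p with Black => Gray | Gray => Black end.

Definition board := cell -> content.

(* Outcome of a move: the game continues with a new constellation,
   or an opponent marble has been pushed off the board (the mover wins). *)
Inductive outcome := Cont (B : board) | PushOff.

(* Broadside move (direction not parallel to the group's line, or a single
   marble): the group is go x u i for i < k, moved one step in direction d. *)
Definition broadside_move (p : player) (B : board) (x : cell) (u : dir) (k : nat)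
    (d : dir) (B' : board) : Prop :=
  let G := fun z => exists i, (i < k)%nat /\ go x u i = Some z in
  let T := fun z => exists y, G y /\ go y d 1 = Some z in
  (1 <= k <= 3)%nat /\
  (forall i, (i < k)%nat -> exists y, go x u i = Some y /\ B y = own p) /\
  (k = 1%nat \/ (d <> u /\ d <> neg u)) /\
  (forall y, G y -> exists t, go y d 1 = Some t /\ B t = Emp) /\
  (forall z, (T z -> B' z = own p) /\
             (~ T z -> G z -> B' z = Emp) /\
             (~ T z -> ~ G z -> B' z = B z)).

(* In-line move of a group of k >= 2 marbles with front marble y, moving in
   direction d; the group is go y (neg d) i for i < k. *)
Definition inline_group (p : player) (B : board) (y : cell) (d : dir) (k : nat) : Prop :=
  (2 <= k <= 3)%nat /\
  (forall i, (i < k)%nat -> exists z, go y (neg d) i = Some z /\ B z = own p).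

Definition inline_advance (p : player) (B : board) (y : cell) (d : dir) (k : nat)
    (B' : board) : Prop :=
  inline_group p B y d k /\
  exists X tl, go y d 1 = Some X /\ B X = Emp /\ go y (neg d) (k - 1) = Some tl /\
  (forall z, (z = X -> B' z = own p) /\
             (z = tl -> B' z = Emp) /\
             (z <> X -> z <> tl -> B' z = B z)).

Definition inline_push_stay (p : player) (B : board) (y : cell) (d : dir) (k : nat)
    (B' : board) : Prop :=
  inline_group p B y d k /\
  exists m X W tl, (1 <= m)%nat /\ (m < k)%nat /\
  (forall j, (1 <= j <= m)%nat -> exists z, go y d j = Some z /\ B z = own (other p)) /\
  go y d 1 = Some X /\ go y d (S m) = Some W /\ B W = Emp /\
  go y (neg d) (k - 1) = Some tl /\
  (forall z, (z = W -> B' z = own (other p)) /\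
             (z = X -> B' z = own p) /\
             (z = tl -> B' z = Emp) /\
             (z <> W -> z <> X -> z <> tl -> B' z = B z)).

Definition inline_push_off (p : player) (B : board) (y : cell) (d : dir) (k : nat) : Prop :=
  inline_group p B y d k /\
  exists m, (1 <= m)%nat /\ (m < k)%nat /\
  (forall j, (1 <= j <= m)%nat -> exists z, go y d j = Some z /\ B z = own (other p)) /\
  go y d (S m) = None.

Definition legal_move (p : player) (B : board) (o : outcome) : Prop :=
  match o with
  | Cont B' =>
      (exists x u k d, broadside_move p B x u k d B') \/
      (exists y d k, inline_advance p B y d k B') \/
      (exists y d k, inline_push_stay p B y d k B')
  | PushOff => exists y d k, inline_push_off p B y d k
  end.

Inductive forces_win (p : player) : board -> Prop :=
| fw_push B : legal_move p B PushOff -> forces_win p B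
| fw_move B B' : legal_move p B (Cont B') ->
    (forall o, legal_move (other p) B' o ->
       exists B'', o = Cont B'' /\ forces_win p B'') ->
    forces_win p B.

Definition sym_lr (x : cell) : cell :=
  match x with
  | ca => ch | ch => ca | cb => ci | ci => cb | cc => cj | cj => cc
  | cd => cd | ce => ce | cf => cf | cg => cg
  end.
Definition sym_tb (x : cell) : cell :=
  match x with
  | ca => cc | cc => ca | cd => cg | cg => cd | ce => cf | cf => ce
  | ch => cj | cj => ch | cb => cb | ci => ci
  end.
Definition symmetries : list (cell -> cell) :=
  [fun x => x; sym_lr; sym_tb; fun x => sym_lr (sym_tb x)].

Definition isomorphic (B1 B2 : board) : Prop :=
  exists s, In s symmetries /\ forall z, B2 z = B1 (s z).

Definition C0 : board := fun z =>
  match z with cc | cg | cj => Blk | ca | cd | ch => Gry | _ => Emp end.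
Definition C1 : board := fun z =>
  match z with cc | cf | cg => Blk | ca | cd | ch => Gry | _ => Emp end.

(* Main.v *)
Require Import Defs.
From Stdlib Require Import ZArith List Bool Lia FunctionalExtensionality.
Import ListNotations.
Local Open Scope nat_scope.

Definition ceq (a b : content) : bool :=
  match a, b with Blk, Blk | Gry, Gry | Emp, Emp => true | _, _ => false end.
Lemma ceq_spec a b : ceq a b = true <-> a = b.
Proof. destruct a, b; simpl; split; congruence. Qed.

Definition cell_eq_dec : forall x y : cell, {x = y} + {x <> y}.
Proof. decide equality. Defined.
Definition dir_eq_dec : forall x y : dir, {x = y} + {x <> y}.
Proof. decide equality. Defined.
Definition celleq (x y : cell) : bool := if cell_eq_dec x y then true else false.
Definition deq (x y : dir) : bool := if dir_eq_dec x y then true else false.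
Lemma celleq_spec x y : celleq x y = true <-> x = y.
Proof. unfold celleq; destruct (cell_eq_dec x y); split; congruence. Qed.
Lemma celleq_refl x : celleq x x = true.
Proof. apply celleq_spec; auto. Qed.
Lemma celleq_false x y : x <> y -> celleq x y = false.
Proof. intro H; destruct (celleq x y) eqn:E; auto. apply celleq_spec in E; contradiction. Qed.
Lemma deq_spec x y : deq x y = true <-> x = y.
Proof. unfold deq; destruct (dir_eq_dec x y); split; congruence. Qed.
Lemma ndeq_spec x y : negb (deq x y) = true <-> x <> y.
Proof. rewrite negb_true_iff. unfold deq; destruct (dir_eq_dec x y); split; congruence. Qed.

Definition oeq (a b : option cell) : bool :=
  match a, b with Some x, Some y => celleq x y | None, None => true | _, _ => false end.
Lemma oeq_spec a b : oeq a b = true <-> a = b.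
Proof. destruct a, b; simpl; try (split; congruence). rewrite celleq_spec; split; congruence. Qed.

Lemma all_cells_in x : In x all_cells.
Proof. destruct x; simpl; tauto. Qed.
Definition all_dirs := [dN; dS; dE; dW; dSE; dNW].
Lemma all_dirs_in d : In d all_dirs.
Proof. destruct d; simpl; tauto. Qed.

Definition inG x u k z := existsb (fun i => oeq (go x u i) (Some z)) (seq 0 k).
Lemma inG_spec x u k z : inG x u k z = true <-> exists i, i < k /\ go x u i = Some z.
Proof. unfold inG. rewrite existsb_exists. split.
 - intros [i [Hi H]]. apply in_seq in Hi. apply oeq_spec in H. exists i. split; [lia|exact H].
 - intros [i [Hi H]]. exists i. split. apply in_seq; lia. apply oeq_spec; exact H.
Qed.

Definition inT x u k d z := existsb (fun y => inG x u k y && oeq (go y d 1) (Some z)) all_cells.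
Lemma inT_spec x u k d z : inT x u k d z = true <->
  exists y, (exists i, i < k /\ go x u i = Some y) /\ go y d 1 = Some z.
Proof. unfold inT. rewrite existsb_exists. split.
 - intros [y [_ H]]. apply andb_true_iff in H as [H1 H2]. apply inG_spec in H1. apply oeq_spec in H2. eauto.
 - intros [y [H1 H2]]. exists y. split. apply all_cells_in. apply andb_true_iff; split. apply inG_spec; auto. apply oeq_spec; auto.
Qed.

Definition grp_ok p (B : board) x u k := forallb (fun i => match go x u i with Some y => ceq (B y) (own p) | None => false end) (seq 0 k).
Lemma grp_ok_spec p B x u k : grp_ok p B x u k = true <-> forall i, i < k -> exists y, go x u i = Some y /\ B y = own p.
Proof. unfold grp_ok. rewrite forallb_forall. split.
 - intros H i Hi. assert (Hin : In i (seq 0 k)) by (apply in_seq; lia). specialize (H i Hin).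
   destruct (go x u i) as [y|]; [|discriminate]. exists y; split; auto. apply ceq_spec; auto.
 - intros H i Hi. apply in_seq in Hi. destruct (H i ltac:(lia)) as [y [E F]]. rewrite E. apply ceq_spec; auto.
Qed.

Definition tgt_ok (B : board) x u k d := forallb (fun y => negb (inG x u k y) || match go y d 1 with Some t => ceq (B t) Emp | None => false end) all_cells.
Lemma tgt_ok_spec B x u k d : tgt_ok B x u k d = true <->
  forall y, (exists i, i < k /\ go x u i = Some y) -> exists t, go y d 1 = Some t /\ B t = Emp.
Proof. unfold tgt_ok. rewrite forallb_forall. split.
 - intros H y Hy. specialize (H y (all_cells_in y)). apply inG_spec in Hy. rewrite Hy in H. cbn [negb orb] in H.
   destruct (go y d 1) as [t|]; [|discriminate]. exists t; split; auto; apply ceq_spec; auto.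
 - intros H y _. destruct (inG x u k y) eqn:E; cbn [negb orb]; auto. apply inG_spec in E.
   destruct (H y E) as [t [E1 E2]]. rewrite E1. apply ceq_spec; auto.
Qed.

Definition bcond p B x u k d := (1 <=? k) && (k <=? 3) && grp_ok p B x u k &&
  (Nat.eqb k 1 || (negb (deq d u) && negb (deq d (neg u)))) && tgt_ok B x u k d.
Definition bres p (B : board) x u k d : board :=
  fun z => if inT x u k d z then own p else if inG x u k z then Emp else B z.
Definition bs p B x u k d := if bcond p B x u k d then Some (bres p B x u k d) else None.

Lemma bcond_spec p B x u k d : bcond p B x u k d = true <->
  (1 <= k <= 3) /\ (forall i, i < k -> exists y, go x u i = Some y /\ B y = own p) /\
  (k = 1 \/ (d <> u /\ d <> neg u)) /\
  (forall y, (exists i, i < k /\ go x u i = Some y) -> exists t, go y d 1 = Some t /\ B t = Emp).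
Proof. unfold bcond. rewrite !andb_true_iff, orb_true_iff, andb_true_iff, !Nat.leb_le, Nat.eqb_eq,
  grp_ok_spec, tgt_ok_spec, !ndeq_spec. tauto. Qed.

Lemma bs_sound p B x u k d : bcond p B x u k d = true -> broadside_move p B x u k d (bres p B x u k d).
Proof. intro H. apply bcond_spec in H. destruct H as [Hk [Hg [Hd Ht]]].
 unfold broadside_move. cbv beta zeta. split; [auto|]. split; [auto|]. split; [auto|]. split; [auto|].
 intro z. unfold bres. split; [|split].
 - intro HT. apply inT_spec in HT. rewrite HT. reflexivity.
 - intros HT HG. destruct (inT x u k d z) eqn:E. apply inT_spec in E; contradiction.
   apply inG_spec in HG. rewrite HG. reflexivity.
 - intros HT HG. destruct (inT x u k d z) eqn:E. apply inT_spec in E; contradiction.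
   destruct (inG x u k z) eqn:E2. apply inG_spec in E2; contradiction. reflexivity.
Qed.

Lemma bs_complete p B x u k d B' : broadside_move p B x u k d B' ->
  bcond p B x u k d = true /\ forall z, B' z = bres p B x u k d z.
Proof. unfold broadside_move; cbv beta zeta. intros [Hk [Hg [Hd [Ht Hz]]]]. split. apply bcond_spec; auto.
 intro z. destruct (Hz z) as [H1 [H2 H3]]. unfold bres. destruct (inT x u k d z) eqn:E1.
 - apply H1. apply inT_spec; auto.
 - destruct (inG x u k z) eqn:E2.
   + apply H2. intro HT; apply inT_spec in HT; congruence. apply inG_spec; auto.
   + apply H3; intro HT. apply inT_spec in HT; congruence. apply inG_spec in HT; congruence.
Qed.

Lemma own_ne_emp p : own p <> Emp. Proof. destruct p; discriminate. Qed.
Lemma own_ne_other p : own p <> own (other p). Proof. destruct p; discriminate. Qed.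
Lemma other_ne_emp p : own (other p) <> Emp. Proof. destruct p; discriminate. Qed.

Definition adv p (B : board) y d k : option board :=
  if (2 <=? k) && (k <=? 3) && grp_ok p B y (neg d) k then
   match go y d 1, go y (neg d) (k-1) with
   | Some X, Some tl => if ceq (B X) Emp then
       Some (fun z => if celleq z X then own p else if celleq z tl then Emp else B z) else None
   | _, _ => None end
  else None.

Lemma adv_sound p B y d k B' : adv p B y d k = Some B' -> inline_advance p B y d k B'.
Proof. unfold adv. destruct ((2 <=? k) && (k <=? 3) && grp_ok p B y (neg d) k) eqn:Hc; [|discriminate].
 rewrite !andb_true_iff, !Nat.leb_le, grp_ok_spec in Hc. destruct Hc as [[Hk1 Hk2] Hg].
 destruct (go y d 1) as [X|] eqn:EX; [|discriminate].
 destruct (go y (neg d) (k-1)) as [tl|] eqn:Etl; [|discriminate].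
 destruct (ceq (B X) Emp) eqn:EB; [|discriminate]. intro H; injection H; clear H; intro H; subst B'.
 apply ceq_spec in EB.
 assert (Htl : B tl = own p). { destruct (Hg (k-1) ltac:(lia)) as [w [E1 E2]]. rewrite Etl in E1. injection E1; intros; subst; auto. }
 assert (XT : tl <> X). { intro; subst. pose proof (own_ne_emp p). congruence. }
 split. split; auto.
 exists X, tl. split; auto. split; auto. split; auto.
 intro z. cbv beta. split; [|split].
 - intro; subst z. rewrite celleq_refl. reflexivity.
 - intro; subst z. rewrite celleq_false by auto. rewrite celleq_refl. reflexivity.
 - intros n1 n2. rewrite !celleq_false by auto. reflexivity.
Qed.

Lemma adv_complete p B y d k B' : inline_advance p B y d k B' ->
  exists B0, adv p B y d k = Some B0 /\ forall z, B' z = B0 z.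
Proof. intros [[Hk Hg] [X [tl [EX [EB [Etl Hz]]]]]]. unfold adv.
 assert (Hc : (2 <=? k) && (k <=? 3) && grp_ok p B y (neg d) k = true).
 { rewrite !andb_true_iff, !Nat.leb_le, grp_ok_spec. split; [split|]; try lia; auto. }
 rewrite Hc, EX, Etl, EB. cbn [ceq]. eexists; split; [reflexivity|].
 intro z. destruct (Hz z) as [H1 [H2 H3]]. cbv beta.
 destruct (celleq z X) eqn:E1. apply celleq_spec in E1; auto.
 destruct (celleq z tl) eqn:E2. apply celleq_spec in E2; auto.
 apply H3; intro; subst; [rewrite celleq_refl in E1 | rewrite celleq_refl in E2]; discriminate.
Qed.

Definition opp_ok p (B : board) y d m := forallb (fun j => match go y d j with Some z => ceq (B z) (own (other p)) | None => false end) (seq 1 m).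
Lemma opp_ok_spec p B y d m : opp_ok p B y d m = true <->
  forall j, 1 <= j <= m -> exists z, go y d j = Some z /\ B z = own (other p).
Proof. unfold opp_ok. rewrite forallb_forall. split.
 - intros H j Hj. assert (Hin : In j (seq 1 m)) by (apply in_seq; lia). specialize (H j Hin).
   destruct (go y d j) as [z|]; [|discriminate]. exists z; split; auto. apply ceq_spec; auto.
 - intros H j Hj. apply in_seq in Hj. destruct (H j ltac:(lia)) as [z [E F]]. rewrite E. apply ceq_spec; auto.
Qed.

Definition pcond p B y d k m := (2 <=? k) && (k <=? 3) && grp_ok p B y (neg d) k && (1 <=? m) && (m <? k) && opp_ok p B y d m.
Lemma pcond_spec p B y d k m : pcond p B y d k m = true <->
  inline_group p B y d k /\ 1 <= m /\ m < k /\ (forall j, 1 <= j <= m -> exists z, go y d j = Some z /\ B z = own (other p)).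
Proof. unfold pcond, inline_group. rewrite !andb_true_iff, !Nat.leb_le, Nat.ltb_lt, grp_ok_spec, opp_ok_spec. tauto. Qed.

Definition pst p (B : board) y d k m : option board :=
  if pcond p B y d k m then
   match go y d 1, go y d (S m), go y (neg d) (k-1) with
   | Some X, Some W, Some tl => if ceq (B W) Emp then
       Some (fun z => if celleq z W then own (other p) else if celleq z X then own p
                      else if celleq z tl then Emp else B z) else None
   | _, _, _ => None end
  else None.

Lemma pst_sound p B y d k m B' : pst p B y d k m = Some B' -> inline_push_stay p B y d k B'.
Proof. unfold pst. destruct (pcond p B y d k m) eqn:Hc; [|discriminate].
 apply pcond_spec in Hc. destruct Hc as [[Hk Hg] [Hm1 [Hmk Ho]]].
 destruct (go y d 1) as [X|] eqn:EX; [|discriminate].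
 destruct (go y d (S m)) as [W|] eqn:EW; [|discriminate].
 destruct (go y (neg d) (k-1)) as [tl|] eqn:Etl; [|discriminate].
 destruct (ceq (B W) Emp) eqn:EB; [|discriminate]. intro H; injection H; clear H; intro H; subst B'.
 apply ceq_spec in EB.
 assert (Htl : B tl = own p). { destruct (Hg (k-1) ltac:(lia)) as [w [E1 E2]]. rewrite Etl in E1. injection E1; intros; subst; auto. }
 assert (HX : B X = own (other p)). { destruct (Ho 1 ltac:(lia)) as [w [E1 E2]]. rewrite EX in E1. injection E1; intros; subst; auto. }
 pose proof (own_ne_emp p). pose proof (own_ne_other p). pose proof (other_ne_emp p).
 assert (XW : X <> W) by (intro; subst; congruence).
 assert (TW : tl <> W) by (intro; subst; congruence).
 assert (TX : tl <> X) by (intro; subst; congruence).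
 split. split; auto.
 exists m, X, W, tl. split; auto. split; auto. split; auto. split; auto. split; auto. split; auto. split; auto.
 intro z. cbv beta. split; [|split; [|split]].
 - intro; subst z. rewrite celleq_refl. reflexivity.
 - intro; subst z. rewrite celleq_false by auto. rewrite celleq_refl. reflexivity.
 - intro; subst z. rewrite !celleq_false by auto. rewrite celleq_refl. reflexivity.
 - intros n1 n2 n3. rewrite !celleq_false by auto. reflexivity.
Qed.

Lemma pst_complete p B y d k B' : inline_push_stay p B y d k B' ->
  exists m B0, 1 <= m < k /\ 2 <= k <= 3 /\ pst p B y d k m = Some B0 /\ forall z, B' z = B0 z.
Proof. intros [[Hk Hg] [m [X [W [tl [Hm1 [Hmk [Ho [EX [EW [EBW [Etl Hz]]]]]]]]]]]].
 exists m. unfold pst.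
 assert (Hc : pcond p B y d k m = true). { apply pcond_spec. split; [split|]; auto. }
 rewrite Hc, EX, EW, Etl, EBW. cbn [ceq]. eexists; split; [lia|]. split; [lia|]. split; [reflexivity|].
 intro z. destruct (Hz z) as [H1 [H2 [H3 H4]]]. cbv beta.
 destruct (celleq z W) eqn:E1. apply celleq_spec in E1; auto.
 destruct (celleq z X) eqn:E2. apply celleq_spec in E2; auto.
 destruct (celleq z tl) eqn:E3. apply celleq_spec in E3; auto.
 apply H4; intro; subst; [rewrite celleq_refl in E1 | rewrite celleq_refl in E2 | rewrite celleq_refl in E3]; discriminate.
Qed.

Definition po p B y d k m := pcond p B y d k m && match go y d (S m) with None => true | Some _ => false end.

Definition optl (o : option board) : list board := match o with Some b => [b] | None => [] end.
Definition gen p B : list board :=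
  flat_map (fun x => flat_map (fun u => flat_map (fun k => flat_map (fun d => optl (bs p B x u k d)) all_dirs) [1;2;3]) all_dirs) all_cells
  ++ flat_map (fun y => flat_map (fun d => flat_map (fun k => optl (adv p B y d k)) [2;3]) all_dirs) all_cells
  ++ flat_map (fun y => flat_map (fun d => flat_map (fun k => flat_map (fun m => optl (pst p B y d k m)) [1;2]) [2;3]) all_dirs) all_cells.
Definition pushb p B := existsb (fun y => existsb (fun d => existsb (fun k => existsb (fun m => po p B y d k m) [1;2]) [2;3]) all_dirs) all_cells.

Lemma gen_sound p B B0 : In B0 (gen p B) -> legal_move p B (Cont B0).
Proof. unfold gen. intro H. rewrite !in_app_iff in H. destruct H as [H|[H|H]].
 - apply in_flat_map in H as [x [_ H]]. apply in_flat_map in H as [u [_ H]].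
   apply in_flat_map in H as [k [_ H]]. apply in_flat_map in H as [d [_ H]].
   unfold bs in H. destruct (bcond p B x u k d) eqn:E; cbn [optl In] in H; [|contradiction].
   destruct H as [H|[]]. subst. left. exists x, u, k, d. apply bs_sound; auto.
 - apply in_flat_map in H as [y [_ H]]. apply in_flat_map in H as [d [_ H]].
   apply in_flat_map in H as [k [_ H]].
   destruct (adv p B y d k) eqn:E; cbn [optl In] in H; [|contradiction].
   destruct H as [H|[]]. subst. right; left. exists y, d, k. apply adv_sound; auto.
 - apply in_flat_map in H as [y [_ H]]. apply in_flat_map in H as [d [_ H]].
   apply in_flat_map in H as [k [_ H]]. apply in_flat_map in H as [m [_ H]].
   destruct (pst p B y d k m) eqn:E; cbn [optl In] in H; [|contradiction].
   destruct H as [H|[]]. subst. right; right. exists y, d, k. eapply pst_sound; eauto.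
Qed.

Lemma gen_complete p B B' : legal_move p B (Cont B') -> exists B0, In B0 (gen p B) /\ forall z, B' z = B0 z.
Proof. cbn [legal_move]. intros [[x [u [k [d H]]]]|[[y [d [k H]]]|[y [d [k H]]]]].
 - destruct (bs_complete _ _ _ _ _ _ _ H) as [Hc Hz]. exists (bres p B x u k d). split; auto.
   unfold gen. apply in_app_iff; left. apply in_flat_map; exists x; split; [apply all_cells_in|].
   apply in_flat_map; exists u; split; [apply all_dirs_in|]. apply in_flat_map; exists k; split.
   { pose proof Hc as Hc'. apply bcond_spec in Hc'. destruct Hc' as [Hk _].
     destruct k as [|[|[|[|k]]]]; cbn [In]; try lia; tauto. }
   apply in_flat_map; exists d; split; [apply all_dirs_in|]. unfold bs; rewrite Hc; cbn [optl In]; auto.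
 - destruct (adv_complete _ _ _ _ _ _ H) as [B0 [E Hz]]. exists B0. split; auto.
   destruct H as [[Hk _] _].
   unfold gen. apply in_app_iff; right; apply in_app_iff; left. apply in_flat_map; exists y; split; [apply all_cells_in|].
   apply in_flat_map; exists d; split; [apply all_dirs_in|]. apply in_flat_map; exists k; split.
   { destruct k as [|[|[|[|k]]]]; cbn [In]; try lia; tauto. }
   rewrite E; cbn [optl In]; auto.
 - destruct (pst_complete _ _ _ _ _ _ H) as [m [B0 [Hm [Hk [E Hz]]]]]. exists B0. split; auto.
   unfold gen. apply in_app_iff; right; apply in_app_iff; right. apply in_flat_map; exists y; split; [apply all_cells_in|].
   apply in_flat_map; exists d; split; [apply all_dirs_in|]. apply in_flat_map; exists k; split.
   { destruct k as [|[|[|[|k]]]]; cbn [In]; try lia; tauto. }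
   apply in_flat_map; exists m; split.
   { destruct m as [|[|[|m]]]; cbn [In]; try lia; tauto. }
   rewrite E; cbn [optl In]; auto.
Qed.

Lemma pushb_sound p B : pushb p B = true -> legal_move p B PushOff.
Proof. unfold pushb. intro H. apply existsb_exists in H as [y [_ H]]. apply existsb_exists in H as [d [_ H]].
 apply existsb_exists in H as [k [_ H]]. apply existsb_exists in H as [m [_ H]].
 unfold po in H. apply andb_true_iff in H as [H1 H2]. apply pcond_spec in H1 as [Hg [Hm1 [Hmk Ho]]].
 cbn [legal_move]. exists y, d, k. split; auto. exists m. split; auto. split; auto. split; auto.
 destruct (go y d (S m)); [discriminate|reflexivity].
Qed.

Lemma pushb_complete p B : legal_move p B PushOff -> pushb p B = true.
Proof. cbn [legal_move]. intros [y [d [k [Hg [m [Hm1 [Hmk [Ho En]]]]]]]].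
 unfold pushb. apply existsb_exists; exists y; split; [apply all_cells_in|].
 apply existsb_exists; exists d; split; [apply all_dirs_in|].
 apply existsb_exists; exists k; split.
 { destruct Hg as [Hk _]. destruct k as [|[|[|[|k]]]]; cbn [In]; try lia; tauto. }
 apply existsb_exists; exists m; split.
 { destruct Hg as [Hk _]. destruct m as [|[|[|m]]]; cbn [In]; try lia; tauto. }
 unfold po. rewrite En. rewrite andb_true_r. apply pcond_spec. auto.
Qed.

Definition code := list content.
Definition cidx (z : cell) : nat :=
  match z with ca => 0 | cb => 1 | cc => 2 | cd => 3 | ce => 4 | cf => 5 | cg => 6 | ch => 7 | ci => 8 | cj => 9 end.
Definition dec (s : code) : board := fun z => nth (cidx z) s Emp.
Definition enc (B : board) : code := map B all_cells.
Lemma dec_enc B : dec (enc B) = B.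
Proof. apply functional_extensionality; intro z; destruct z; reflexivity. Qed.

Fixpoint ceql (s t : code) : bool :=
  match s, t with [], [] => true | a :: s', b :: t' => ceq a b && ceql s' t' | _, _ => false end.
Lemma ceql_sound s t : ceql s t = true -> s = t.
Proof. revert t; induction s as [|a s IH]; intros [|b t] H; cbn [ceql] in H; try discriminate; auto.
 apply andb_true_iff in H as [H1 H2]. apply ceq_spec in H1. f_equal; auto. Qed.
Definition lmem (s : code) (L : list code) : bool := existsb (ceql s) L.
Lemma lmem_sound s L : lmem s L = true -> In s L.
Proof. unfold lmem. intro H. apply existsb_exists in H as [t [Ht H]]. apply ceql_sound in H. subst; auto. Qed.

Definition entry (done : list code) (s t : code) : bool :=
  pushb Gray (dec s) || (lmem t (map enc (gen Gray (dec s))) && negb (pushb Black (dec t)) &&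
    forallb (fun q => lmem q done) (map enc (gen Black (dec t)))).

Fixpoint check (done : list code) (tbl : list (code * code)) : bool :=
  match tbl with
  | [] => true
  | (s, t) :: r => entry done s t && check (s :: done) r
  end.

Lemma entry_ok done s t : (forall q, In q done -> forces_win Gray (dec q)) -> entry done s t = true -> forces_win Gray (dec s).
Proof. intros Hd H. unfold entry in H. apply orb_true_iff in H as [H|H].
 - apply fw_push. apply pushb_sound; auto.
 - rewrite !andb_true_iff in H. destruct H as [[H1 H2] H3].
   apply lmem_sound in H1. apply in_map_iff in H1 as [B0 [Et Hin]]. subst t.
   rewrite dec_enc in H2, H3.
   apply (fw_move Gray (dec s) B0). apply gen_sound; auto.
   intros o Ho. change (other Gray) with Black in Ho. destruct o as [B''|].
   + exists B''. split; auto. destruct (gen_complete _ _ _ Ho) as [B1 [Hin1 Hz]].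
     assert (B'' = B1) by (apply functional_extensionality; auto). subst.
     rewrite forallb_forall in H3. specialize (H3 (enc B1) (in_map _ _ _ Hin1)). apply lmem_sound in H3.
     rewrite <- (dec_enc B1). apply Hd; auto.
   + apply pushb_complete in Ho. rewrite Ho in H2; discriminate.
Qed.

Lemma check_ok : forall tbl done, check done tbl = true -> (forall q, In q done -> forces_win Gray (dec q)) ->
  forall q, In q (map fst tbl) -> forces_win Gray (dec q).
Proof. induction tbl as [|[s t] r IH]; intros done H Hd q Hq; cbn [check map fst In] in *. contradiction.
 apply andb_true_iff in H as [H1 H2].
 assert (Hs : forces_win Gray (dec s)) by (eapply entry_ok; eauto).
 destruct Hq as [Hq|Hq]. subst; auto.
 apply (IH (s :: done)); auto. intros q' [E|E]; subst; auto.
Qed.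

Definition isob (B : board) : bool := existsb (fun f => forallb (fun z => ceq (C1 z) (B (f z))) all_cells) symmetries.
Lemma isob_sound B : isob B = true -> isomorphic B C1.
Proof. unfold isob. intro H. apply existsb_exists in H as [f [Hf H]]. exists f. split; auto.
 intro z. rewrite forallb_forall in H. apply ceq_spec. apply H. apply all_cells_in. Qed.

Definition table : list (code*code) :=
  [([Gry;Gry;Emp;Emp;Gry;Blk;Blk;Emp;Blk;Emp],[Gry;Gry;Emp;Emp;Gry;Blk;Blk;Emp;Blk;Emp]);
   ([Emp;Gry;Blk;Gry;Gry;Emp;Emp;Blk;Blk;Emp],[Emp;Gry;Blk;Gry;Gry;Emp;Emp;Blk;Blk;Emp]);
   ([Emp;Blk;Emp;Gry;Gry;Blk;Emp;Gry;Blk;Emp],[Emp;Blk;Emp;Gry;Gry;Blk;Emp;Gry;Blk;Emp]);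
   ([Emp;Emp;Blk;Emp;Gry;Gry;Blk;Gry;Blk;Emp],[Emp;Emp;Blk;Emp;Gry;Gry;Blk;Gry;Blk;Emp]);
   ([Gry;Blk;Emp;Emp;Gry;Emp;Blk;Gry;Blk;Emp],[Gry;Blk;Emp;Emp;Gry;Emp;Blk;Gry;Blk;Emp]);
   ([Emp;Blk;Emp;Emp;Gry;Blk;Blk;Gry;Gry;Emp],[Emp;Blk;Emp;Emp;Gry;Blk;Blk;Gry;Gry;Emp]);
   ([Gry;Blk;Emp;Emp;Gry;Blk;Emp;Gry;Blk;Emp],[Gry;Blk;Emp;Emp;Gry;Blk;Emp;Gry;Blk;Emp]);
   ([Gry;Blk;Blk;Emp;Gry;Emp;Emp;Gry;Emp;Blk],[Gry;Blk;Blk;Emp;Gry;Emp;Emp;Gry;Emp;Blk]);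
   ([Emp;Emp;Blk;Emp;Gry;Emp;Blk;Gry;Gry;Blk],[Emp;Emp;Blk;Emp;Gry;Emp;Blk;Gry;Gry;Blk]);
   ([Gry;Emp;Emp;Gry;Gry;Blk;Blk;Emp;Blk;Emp],[Gry;Emp;Emp;Gry;Gry;Blk;Blk;Emp;Blk;Emp]);
   ([Gry;Blk;Emp;Emp;Gry;Gry;Blk;Emp;Emp;Blk],[Gry;Blk;Emp;Emp;Gry;Gry;Blk;Emp;Emp;Blk]);
   ([Emp;Blk;Emp;Emp;Gry;Gry;Blk;Gry;Emp;Blk],[Emp;Blk;Emp;Emp;Gry;Gry;Blk;Gry;Emp;Blk]);
   ([Emp;Blk;Blk;Gry;Gry;Emp;Emp;Gry;Emp;Blk],[Emp;Blk;Blk;Gry;Gry;Emp;Emp;Gry;Emp;Blk]);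
   ([Gry;Gry;Blk;Emp;Gry;Emp;Emp;Emp;Blk;Blk],[Gry;Gry;Blk;Emp;Gry;Emp;Emp;Emp;Blk;Blk]);
   ([Gry;Emp;Blk;Emp;Gry;Gry;Blk;Emp;Blk;Emp],[Gry;Emp;Blk;Emp;Gry;Gry;Blk;Emp;Blk;Emp]);
   ([Emp;Blk;Emp;Gry;Gry;Emp;Emp;Gry;Blk;Blk],[Emp;Blk;Emp;Gry;Gry;Emp;Emp;Gry;Blk;Blk]);
   ([Blk;Emp;Blk;Emp;Emp;Gry;Blk;Gry;Gry;Emp],[Blk;Emp;Blk;Emp;Emp;Gry;Blk;Gry;Gry;Emp]);
   ([Blk;Emp;Emp;Emp;Gry;Gry;Blk;Gry;Blk;Emp],[Blk;Emp;Emp;Emp;Gry;Gry;Blk;Gry;Blk;Emp]);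
   ([Emp;Blk;Emp;Emp;Gry;Emp;Blk;Gry;Gry;Blk],[Emp;Blk;Emp;Emp;Gry;Emp;Blk;Gry;Gry;Blk]);
   ([Emp;Gry;Blk;Emp;Gry;Gry;Blk;Emp;Emp;Blk],[Emp;Gry;Blk;Emp;Gry;Gry;Blk;Emp;Emp;Blk]);
   ([Gry;Blk;Blk;Gry;Gry;Emp;Emp;Emp;Blk;Emp],[Gry;Blk;Blk;Gry;Gry;Emp;Emp;Emp;Blk;Emp]);
   ([Emp;Gry;Emp;Gry;Gry;Emp;Blk;Blk;Emp;Blk],[Emp;Gry;Emp;Gry;Gry;Emp;Blk;Blk;Emp;Blk]);
   ([Emp;Gry;Emp;Gry;Gry;Blk;Emp;Blk;Blk;Emp],[Emp;Gry;Emp;Gry;Gry;Blk;Emp;Blk;Blk;Emp]);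
   ([Gry;Emp;Blk;Emp;Gry;Blk;Emp;Gry;Blk;Emp],[Gry;Emp;Blk;Emp;Gry;Blk;Emp;Gry;Blk;Emp]);
   ([Gry;Blk;Emp;Gry;Gry;Blk;Emp;Emp;Blk;Emp],[Gry;Blk;Emp;Gry;Gry;Blk;Emp;Emp;Blk;Emp]);
   ([Emp;Gry;Blk;Gry;Gry;Emp;Blk;Blk;Emp;Emp],[Emp;Gry;Blk;Gry;Gry;Emp;Blk;Blk;Emp;Emp]);
   ([Blk;Emp;Emp;Emp;Emp;Gry;Blk;Gry;Gry;Blk],[Blk;Emp;Emp;Emp;Emp;Gry;Blk;Gry;Gry;Blk]);
   ([Emp;Gry;Blk;Emp;Gry;Gry;Emp;Emp;Blk;Blk],[Emp;Gry;Blk;Emp;Gry;Gry;Emp;Emp;Blk;Blk]);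
   ([Gry;Gry;Blk;Emp;Gry;Emp;Blk;Emp;Blk;Emp],[Gry;Gry;Blk;Emp;Gry;Emp;Blk;Emp;Blk;Emp]);
   ([Emp;Blk;Emp;Gry;Gry;Emp;Blk;Gry;Emp;Blk],[Emp;Blk;Emp;Gry;Gry;Emp;Blk;Gry;Emp;Blk]);
   ([Blk;Blk;Emp;Emp;Emp;Gry;Emp;Gry;Gry;Blk],[Blk;Blk;Emp;Emp;Emp;Gry;Emp;Gry;Gry;Blk]);
   ([Gry;Blk;Emp;Emp;Gry;Blk;Blk;Gry;Emp;Emp],[Gry;Blk;Emp;Emp;Gry;Blk;Blk;Gry;Emp;Emp]);
   ([Emp;Blk;Emp;Gry;Gry;Blk;Blk;Gry;Emp;Emp],[Emp;Blk;Emp;Gry;Gry;Blk;Blk;Gry;Emp;Emp]);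
   ([Gry;Blk;Blk;Emp;Gry;Blk;Emp;Gry;Emp;Emp],[Gry;Blk;Blk;Emp;Gry;Blk;Emp;Gry;Emp;Emp]);
   ([Gry;Emp;Blk;Emp;Gry;Emp;Emp;Gry;Blk;Blk],[Gry;Emp;Blk;Emp;Gry;Emp;Emp;Gry;Blk;Blk]);
   ([Gry;Gry;Blk;Emp;Gry;Blk;Emp;Emp;Emp;Blk],[Gry;Gry;Blk;Emp;Gry;Blk;Emp;Emp;Emp;Blk]);
   ([Gry;Emp;Emp;Emp;Gry;Blk;Blk;Gry;Blk;Emp],[Gry;Emp;Emp;Emp;Gry;Blk;Blk;Gry;Blk;Emp]);
   ([Emp;Emp;Emp;Gry;Blk;Blk;Emp;Gry;Gry;Blk],[Emp;Emp;Emp;Gry;Blk;Blk;Emp;Gry;Gry;Blk]);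
   ([Gry;Blk;Emp;Emp;Gry;Blk;Emp;Gry;Emp;Blk],[Gry;Blk;Emp;Emp;Gry;Blk;Emp;Gry;Emp;Blk]);
   ([Gry;Emp;Emp;Gry;Gry;Emp;Blk;Emp;Blk;Blk],[Gry;Emp;Emp;Gry;Gry;Emp;Blk;Emp;Blk;Blk]);
   ([Gry;Emp;Blk;Gry;Gry;Emp;Blk;Emp;Blk;Emp],[Gry;Emp;Blk;Gry;Gry;Emp;Blk;Emp;Blk;Emp]);
   ([Emp;Emp;Blk;Emp;Gry;Blk;Emp;Gry;Gry;Blk],[Emp;Emp;Blk;Emp;Gry;Blk;Emp;Gry;Gry;Blk]);
   ([Emp;Emp;Emp;Blk;Gry;Gry;Blk;Gry;Emp;Blk],[Emp;Emp;Emp;Blk;Gry;Gry;Blk;Gry;Emp;Blk]);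
   ([Gry;Gry;Blk;Emp;Gry;Emp;Blk;Emp;Emp;Blk],[Gry;Gry;Blk;Emp;Gry;Emp;Blk;Emp;Emp;Blk]);
   ([Emp;Emp;Blk;Blk;Emp;Gry;Emp;Gry;Gry;Blk],[Emp;Emp;Blk;Blk;Emp;Gry;Emp;Gry;Gry;Blk]);
   ([Emp;Gry;Blk;Emp;Gry;Gry;Blk;Blk;Emp;Emp],[Emp;Gry;Blk;Emp;Gry;Gry;Blk;Blk;Emp;Emp]);
   ([Emp;Gry;Emp;Gry;Gry;Blk;Blk;Blk;Emp;Emp],[Emp;Gry;Emp;Gry;Gry;Blk;Blk;Blk;Emp;Emp]);
   ([Emp;Blk;Blk;Gry;Gry;Emp;Blk;Gry;Emp;Emp],[Emp;Blk;Blk;Gry;Gry;Emp;Blk;Gry;Emp;Emp]);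
   ([Emp;Emp;Blk;Emp;Blk;Gry;Emp;Gry;Gry;Blk],[Emp;Emp;Blk;Emp;Blk;Gry;Emp;Gry;Gry;Blk]);
   ([Emp;Blk;Blk;Emp;Emp;Gry;Emp;Gry;Gry;Blk],[Emp;Blk;Blk;Emp;Emp;Gry;Emp;Gry;Gry;Blk]);
   ([Emp;Blk;Blk;Emp;Gry;Emp;Emp;Gry;Gry;Blk],[Emp;Blk;Blk;Emp;Gry;Emp;Emp;Gry;Gry;Blk]);
   ([Gry;Emp;Blk;Gry;Gry;Emp;Emp;Emp;Blk;Blk],[Gry;Emp;Blk;Gry;Gry;Emp;Emp;Emp;Blk;Blk]);
   ([Emp;Gry;Blk;Gry;Gry;Emp;Emp;Blk;Emp;Blk],[Emp;Gry;Blk;Gry;Gry;Emp;Emp;Blk;Emp;Blk]);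
   ([Gry;Gry;Blk;Gry;Blk;Blk;Emp;Emp;Emp;Emp],[Gry;Gry;Blk;Gry;Blk;Blk;Emp;Emp;Emp;Emp]);
   ([Gry;Emp;Emp;Emp;Gry;Blk;Emp;Gry;Blk;Blk],[Gry;Emp;Emp;Emp;Gry;Blk;Emp;Gry;Blk;Blk]);
   ([Emp;Gry;Blk;Emp;Emp;Gry;Blk;Gry;Blk;Emp],[Emp;Gry;Blk;Emp;Gry;Gry;Blk;Emp;Blk;Emp]);
   ([Emp;Emp;Blk;Gry;Gry;Blk;Emp;Gry;Emp;Blk],[Emp;Emp;Blk;Emp;Gry;Gry;Blk;Gry;Emp;Blk]);
   ([Emp;Gry;Blk;Gry;Gry;Blk;Emp;Emp;Blk;Emp],[Emp;Gry;Blk;Emp;Gry;Gry;Blk;Emp;Blk;Emp]);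
   ([Gry;Emp;Emp;Emp;Gry;Blk;Blk;Gry;Emp;Blk],[Emp;Emp;Emp;Emp;Gry;Blk;Blk;Gry;Gry;Blk]);
   ([Emp;Emp;Blk;Gry;Gry;Emp;Blk;Gry;Emp;Blk],[Emp;Emp;Blk;Emp;Gry;Gry;Blk;Gry;Emp;Blk]);
   ([Gry;Emp;Blk;Gry;Gry;Blk;Emp;Emp;Emp;Blk],[Gry;Emp;Blk;Emp;Gry;Gry;Blk;Emp;Emp;Blk]);
   ([Gry;Emp;Blk;Emp;Gry;Blk;Blk;Gry;Emp;Emp],[Gry;Gry;Blk;Emp;Gry;Blk;Blk;Emp;Emp;Emp]);
   ([Gry;Emp;Blk;Gry;Gry;Emp;Blk;Emp;Emp;Blk],[Gry;Emp;Blk;Emp;Gry;Gry;Blk;Emp;Emp;Blk]);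
   ([Blk;Emp;Blk;Emp;Gry;Gry;Emp;Gry;Emp;Blk],[Blk;Emp;Blk;Emp;Emp;Gry;Emp;Gry;Gry;Blk]);
   ([Blk;Emp;Emp;Gry;Gry;Blk;Emp;Gry;Emp;Blk],[Blk;Emp;Emp;Emp;Gry;Gry;Blk;Gry;Emp;Blk]);
   ([Gry;Emp;Blk;Gry;Gry;Blk;Emp;Blk;Emp;Emp],[Emp;Gry;Blk;Gry;Gry;Blk;Emp;Blk;Emp;Emp]);
   ([Gry;Emp;Blk;Emp;Gry;Emp;Blk;Gry;Emp;Blk],[Emp;Gry;Blk;Emp;Emp;Gry;Blk;Gry;Emp;Blk]);
   ([Gry;Blk;Emp;Gry;Emp;Emp;Blk;Gry;Emp;Blk],[Gry;Blk;Emp;Emp;Gry;Emp;Blk;Gry;Emp;Blk]);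
   ([Gry;Emp;Blk;Gry;Emp;Blk;Emp;Gry;Emp;Blk],[Gry;Emp;Blk;Emp;Gry;Blk;Emp;Gry;Emp;Blk]);
   ([Gry;Emp;Blk;Gry;Emp;Blk;Emp;Gry;Blk;Emp],[Gry;Emp;Blk;Gry;Gry;Blk;Emp;Emp;Blk;Emp]);
   ([Gry;Emp;Blk;Gry;Emp;Emp;Blk;Gry;Blk;Emp],[Gry;Emp;Blk;Emp;Gry;Emp;Blk;Gry;Blk;Emp]);
   ([Gry;Blk;Emp;Gry;Emp;Blk;Emp;Gry;Emp;Blk],[Emp;Blk;Emp;Gry;Gry;Blk;Emp;Gry;Emp;Blk])].

Lemma table_ok : check [] table = true.
Proof. vm_compute. reflexivity. Qed.

Lemma final_ok : forallb (fun B => isob B || lmem (enc B) (map fst table)) (gen Black C0) = true.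
Proof. vm_compute. reflexivity. Qed.

Theorem lemma4 : forall C : board,
  legal_move Black C0 (Cont C) -> ~ isomorphic C C1 -> forces_win Gray C.
Proof. intros C H Hn. destruct (gen_complete _ _ _ H) as [B1 [Hin Hz]].
 assert (C = B1) by (apply functional_extensionality; auto). subst.
 pose proof final_ok as F. rewrite forallb_forall in F. specialize (F _ Hin). apply orb_true_iff in F as [F|F].
 - exfalso; apply Hn; apply isob_sound; auto.
 - apply lmem_sound in F. rewrite <- (dec_enc B1). apply (check_ok table []); auto. intros q [].
Qed.
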